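(* Consider the coding-DNA embedding setting described in the context, and let $C_\mathrm{c}=\max_{p(x')} R_\mathrm{c}^{X'}$, the maximum over all probability distributions of $X'$ on $\mathcal{X}'$. Then $C_\mathrm{c}$ is achieved by a deterministic distribution of $X'$, namely the point mass $p(x')=\mathbb{1}[x'=\xi']$ at the amino acid $\xi'\in\mathcal{X}'$ for which the (maximised over $p(\mathbf{u}|\xi')$) output entropy $H(\mathbf{Z}_{(m)})$ is largest among the 21 deterministic distributions of $X'$.
   Context: Let $\mathcal{X}=\{\mathrm{A},\mathrm{C},\mathrm{T},\mathrm{G}\}$ (DNA bases); codons are elements of $\mathcal{X}^3$. Let $\mathcal{X}'=\{$Ala, Arg, Asn, Asp, Cys, Gln, Glu, Gly, His, Ile, Leu, Lys, Met, Phe, Pro, Ser, Thr, Trp, Tyr, Val, Stp$\}$. The genetic code is the map $\alpha:\mathcal{X}^3\to\mathcal{X}'$ whose fibres $\mathcal{S}_{x'}=\{\mathbf{x}\in\mathcal{X}^3:\alpha(\mathbf{x})=x'\}$ are: Ala: GCA, GCC, GCT, GCG; Arg: AGA, AGG, CGA, CGC, CGT, CGG; Asn: AAC, AAT; Asp: GAC, GAT; Cys: TGC, TGT; Gln: CAA, CAG; Glu: GAA, GAG; Gly: GGA, GGC, GGT, GGG; His: CAC, CAT; Ile: ATA, ATC, ATT; Leu: CTA, CTC, CTT, CTG, TTA, TTG; Lys: AAA, AAG; Met: ATG; Phe: TTC, TTT; Pro: CCA, CCC, CCT, CCG; Ser: AGC, AGT, TCA, TCC, TCT, TCG; Thr: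 ACA, ACC, ACT, ACG; Trp: TGG; Tyr: TAC, TAT; Val: GTA, GTC, GTT, GTG; Stp: TAA, TAG, TGA. These 21 sets partition $\mathcal{X}^3$. Mutation channel (Kimura model): for parameters $q\in[0,1]$ and $\gamma\in[0,3/2]$, the $4\times4$ base transition matrix $\Pi=[p(Z=z|Y=y)]$ (rows/columns ordered A, C, T, G) has diagonal entries $1-q$, entries $(1-2\gamma/3)q$ for the pairs $\{\mathrm{A},\mathrm{G}\}$ and $\{\mathrm{C},\mathrm{T}\}$, and entries $\gamma q/3$ for all other off-diagonal pairs. After $m\ge1$ cascaded independent mutation stages, a codon $\mathbf{u}$ is mapped to a random codon $\mathbf{Z}_{(m)}$ through the $64\times64$ transition matrix $\Pi^m\otimes\Pi^m\otimes\Pi^m$ (bases mutate independently). Achievable rate: given a distribution $p(x')$ of the host amino acid $X'$ on $\mathcal{X}'$, consider conditional distributions $p(\mathbf{u}|x')$ supported on $\mathcal{S}_{x'}$, and let $\mathbf{U}$ be the codon with $p(\mathbf{u})=p(x')p(\mathbf{u}|x')$ for $\mathbf{u}\in\mathcal{S}_{x'}$; $\mathbf{U}$ is the channel input and $\mathbf{Z}_{(m)}$ the output. The achievable rate is $R_\mathrm{c}^{X'}=\max_{p(\mathbf{u}|x')} I(\mathbf{Z}_{(m)};\mathbf{U})-H(X')$ bits/codon (logarithms base 2). *)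

(* Defs.v *)
From HB Require Import structures.
From mathcomp Require Import all_boot all_order all_algebra.
From mathcomp Require Import boolp classical_sets reals exp.
Set Implicit Arguments. Unset Strict Implicit. Unset Printing Implicit Defensive.
Import Order.TTheory GRing.Theory Num.Theory.
Local Open Scope ring_scope.

Inductive base := A | C | T | G.

Definition base_to_ord (b : base) : 'I_4 :=
  match b with A => inord 0 | C => inord 1 | T => inord 2 | G => inord 3 end.
Definition ord_to_base (i : 'I_4) : base :=
  match val i with 0 => A | 1 => C | 2 => T | _ => G end.
Lemma base_to_ordK : cancel base_to_ord ord_to_base.
Proof. by case; rewrite /ord_to_base /= inordK. Qed.
HB.instance Definition _ := Finite.copy base (can_type base_to_ordK).

Definition codon : finType := (base * base * base)%type.

Inductive aa := Ala | Arg | Asn | Asp | Cys | Gln | Glu | Gly | His | Ile | Leu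
  | Lys | Met | Phe | Pro | Ser | Thr | Trp | Tyr | Val | Stp.

Definition aa_to_ord (x : aa) : 'I_21 := inord (match x with
  | Ala => 0 | Arg => 1 | Asn => 2 | Asp => 3 | Cys => 4 | Gln => 5 | Glu => 6
  | Gly => 7 | His => 8 | Ile => 9 | Leu => 10 | Lys => 11 | Met => 12
  | Phe => 13 | Pro => 14 | Ser => 15 | Thr => 16 | Trp => 17 | Tyr => 18
  | Val => 19 | Stp => 20 end)%N.
Definition ord_to_aa (i : 'I_21) : aa := match val i with
  | 0 => Ala | 1 => Arg | 2 => Asn | 3 => Asp | 4 => Cys | 5 => Gln | 6 => Glu
  | 7 => Gly | 8 => His | 9 => Ile | 10 => Leu | 11 => Lys | 12 => Met
  | 13 => Phe | 14 => Pro | 15 => Ser | 16 => Thr | 17 => Trp | 18 => Tyr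
  | 19 => Val | _ => Stp end.
Lemma aa_to_ordK : cancel aa_to_ord ord_to_aa.
Proof. by case; rewrite /ord_to_aa /aa_to_ord /= inordK. Qed.
HB.instance Definition _ := Finite.copy aa (can_type aa_to_ordK).

Definition alpha (u : codon) : aa :=
  match u with
  | (A, A, A) => Lys | (A, A, C) => Asn | (A, A, T) => Asn | (A, A, G) => Lys
  | (A, C, _) => Thr
  | (A, T, A) => Ile | (A, T, C) => Ile | (A, T, T) => Ile | (A, T, G) => Met
  | (A, G, A) => Arg | (A, G, C) => Ser | (A, G, T) => Ser | (A, G, G) => Arg
  | (C, A, A) => Gln | (C, A, C) => His | (C, A, T) => His | (C, A, G) => Gln
  | (C, C, _) => Pro
  | (C, T, _) => Leu
  | (C, G, _) => Arg
  | (T, A, A) => Stp | (T, A, C) => Tyr | (T, A, T) => Tyr | (T, A, G) => Stp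
  | (T, C, _) => Ser
  | (T, T, A) => Leu | (T, T, C) => Phe | (T, T, T) => Phe | (T, T, G) => Leu
  | (T, G, A) => Stp | (T, G, C) => Cys | (T, G, T) => Cys | (T, G, G) => Trp
  | (G, A, A) => Glu | (G, A, C) => Asp | (G, A, T) => Asp | (G, A, G) => Glu
  | (G, C, _) => Ala
  | (G, T, _) => Val
  | (G, G, _) => Gly
  end.

Section Channel.
Variable R : realType.

Definition log2 (x : R) : R := ln x / ln 2.

(* Kimura base transition matrix Pi = [p(z|y)] *)
Definition transition (y z : base) : bool :=
  match y, z with
  | A, G | G, A | C, T | T, C => true | _, _ => false end.

Definition Pi (q gam : R) (y z : base) : R :=
  if y == z then 1 - q
  else if transition y z then (1 - 2 * gam / 3) * q
  else gam * q / 3.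

Fixpoint Pi_pow (q gam : R) (n : nat) (y z : base) : R :=
  match n with
  | 0%N => (y == z)%:R
  | n'.+1 => \sum_(w : base) Pi_pow q gam n' y w * Pi q gam w z
  end.

Definition W (q gam : R) (m : nat) (u z : codon) : R :=
  Pi_pow q gam m u.1.1 z.1.1 * Pi_pow q gam m u.1.2 z.1.2 *
  Pi_pow q gam m u.2 z.2.

Definition is_dist (X : finType) (p : X -> R) : Prop :=
  (forall x, 0 <= p x) /\ \sum_x p x = 1.

Definition is_cond (c : aa -> codon -> R) : Prop :=
  forall x', is_dist (c x') /\ (forall u, alpha u != x' -> c x' u = 0).

Definition delta (xi : aa) : aa -> R := fun x => (x == xi)%:R.

Definition entropy (X : finType) (p : X -> R) : R :=
  - \sum_x (if p x == 0 then 0 else p x * log2 (p x)).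

(* law of the input codon U: p(u) = p(x') p(u|x') for u in S_x' *)
Definition pU (p : aa -> R) (c : aa -> codon -> R) (u : codon) : R :=
  p (alpha u) * c (alpha u) u.

Definition pZ (q gam : R) (m : nat) (p : aa -> R) (c : aa -> codon -> R)
  (z : codon) : R := \sum_u pU p c u * W q gam m u z.

Definition mutinf (q gam : R) (m : nat) (p : aa -> R) (c : aa -> codon -> R) : R :=
  \sum_u \sum_z
    (if pU p c u * W q gam m u z == 0 then 0
     else pU p c u * W q gam m u z * log2 (W q gam m u z / pZ q gam m p c z)).

Definition Rc (q gam : R) (m : nat) (p : aa -> R) : R :=
  sup [set mutinf q gam m p c - entropy p | c in is_cond].

Definition Cc (q gam : R) (m : nat) : R :=
  sup [set Rc q gam m p | p in @is_dist aa].

Definition HZmax (q gam : R) (m : nat) (xi : aa) : R :=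
  sup [set entropy (pZ q gam m (delta xi) c) | c in is_cond].

End Channel.

(* Main.v *)
Require Import Defs.
From HB Require Import structures.
From mathcomp Require Import all_boot all_order all_algebra.
From mathcomp Require Import boolp classical_sets reals exp.
From mathcomp Require Import ring lra.
Import Order.TTheory GRing.Theory Num.Theory.
Local Open Scope ring_scope.

Lemma ord_to_baseK : cancel ord_to_base base_to_ord.
Proof. by move=> [[|[|[|[|n]]]] Hi]; apply: val_inj; rewrite /= ?inordK. Qed.

Lemma sum_base (R : realType) (F : base -> R) :
  \sum_(b : base) F b = F A + F C + F T + F G.
Proof.
rewrite (reindex ord_to_base); last by exists base_to_ord => x _; [exact: ord_to_baseK|exact: base_to_ordK].
by rewrite !big_ord_recr big_ord0 /= add0r.
Qed.

Lemma base_eqE (a b : base) : (a == b) = match a, b with A,A|C,C|T,T|G,G => true | _,_ => false end.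
Proof. by case: a; case: b; rewrite ?eqxx //; apply/negbTE/eqP. Qed.

Definition kl (y z : base) : base :=
  match y with
  | A => z
  | G => match z with A => G | G => A | C => T | T => C end
  | C => match z with A => C | C => A | G => T | T => G end
  | T => match z with A => T | T => A | G => C | C => G end
  end.

Lemma klK y : involutive (kl y). Proof. by case: y; case. Qed.
Lemma kl_inj y : injective (kl y). Proof. exact: inv_inj (klK y). Qed.
Lemma kl_self y : kl y y = A. Proof. by case: y. Qed.
Lemma kl_tr y a b : transition (kl y a) (kl y b) = transition a b.
Proof. by case: y; case: a; case: b. Qed.

Lemma Pi_kl (R : realType) (q gam : R) y a b : Pi q gam (kl y a) (kl y b) = Pi q gam a b.
Proof. by rewrite /Pi (inj_eq (kl_inj y)) kl_tr. Qed.

Lemma Pi_pow_kl (R : realType) (q gam : R) n y a b :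
  Pi_pow q gam n (kl y a) (kl y b) = Pi_pow q gam n a b.
Proof.
elim: n a b => [|n IH] a b /=; first by rewrite (inj_eq (kl_inj y)).
rewrite (reindex_inj (kl_inj y)) /=; apply: eq_bigr => w _.
by rewrite IH Pi_kl.
Qed.

Lemma Pi_rowsum (R : realType) (q gam : R) y : \sum_z Pi q gam y z = 1.
Proof. by rewrite sum_base /Pi; case: y; rewrite !base_eqE /=; ring. Qed.

Lemma Pi_ge0 (R : realType) (q gam : R) y z : 0 <= q <= 1 -> 0 <= gam <= 3/2 -> 0 <= Pi q gam y z.
Proof.
move=> /andP[q0 q1] /andP[g0 g1]; rewrite /Pi.
case: ifP => _; first lra.
case: ifP => _; first by apply: mulr_ge0 => //; lra.
apply: divr_ge0 => //; apply: mulr_ge0 => //.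
Qed.

Lemma Pi_pow_ge0 (R : realType) (q gam : R) n y z : 0 <= q <= 1 -> 0 <= gam <= 3/2 -> 0 <= Pi_pow q gam n y z.
Proof.
move=> hq hg; elim: n y z => [|n IH] y z /=; first by rewrite ler0n.
by apply: sumr_ge0 => w _; apply: mulr_ge0 => //; exact: Pi_ge0.
Qed.

Lemma Pi_pow_rowsum (R : realType) (q gam : R) n y : \sum_z Pi_pow q gam n y z = 1.
Proof.
elim: n y => [|n IH] y /=.
  by rewrite (bigD1 y) //= eqxx big1 ?addr0 // => z Hz; rewrite eq_sym (negbTE Hz).
rewrite exchange_big /= -[RHS](IH y); apply: eq_bigr => w _.
by rewrite -mulr_sumr Pi_rowsum mulr1.
Qed.

Lemma sum_codon (R : realType) (F : codon -> R) :
  \sum_(z : codon) F z = \sum_a \sum_b \sum_c F (a, b, c).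
Proof.
have E1 : forall G : (base * base)%type -> R, \sum_(p : base * base) G p = \sum_a \sum_b G (a, b).
  by move=> G; rewrite pair_bigA; apply: eq_bigr => -[].
rewrite -(E1 (fun ab => \sum_c F (ab, c))) pair_bigA; apply: eq_bigr => -[].
by [].
Qed.

Lemma W_ge0 (R : realType) (q gam : R) m u z : 0 <= q <= 1 -> 0 <= gam <= 3/2 -> 0 <= W q gam m u z.
Proof. by move=> hq hg; rewrite /W !mulr_ge0 // Pi_pow_ge0. Qed.

Lemma W_rowsum (R : realType) (q gam : R) m u : \sum_z W q gam m u z = 1.
Proof.
rewrite sum_codon /W /=.
transitivity (\sum_a \sum_b Pi_pow q gam m u.1.1 a * Pi_pow q gam m u.1.2 b).
  apply: eq_bigr => a _; apply: eq_bigr => b _.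
  by rewrite -mulr_sumr Pi_pow_rowsum mulr1.
transitivity (\sum_a Pi_pow q gam m u.1.1 a).
  by apply: eq_bigr => a _; rewrite -mulr_sumr Pi_pow_rowsum mulr1.
by rewrite Pi_pow_rowsum.
Qed.

Definition klc (u z : codon) : codon := (kl u.1.1 z.1.1, kl u.1.2 z.1.2, kl u.2 z.2).

Lemma klc_inj u : injective (klc u).
Proof.
move=> [[a b] c] [[a' b'] c'] /= [/kl_inj -> /kl_inj -> /kl_inj ->] //.
Qed.

Lemma W_kl (R : realType) (q gam : R) m u z : W q gam m u z = W q gam m (A, A, A) (klc u z).
Proof.
rewrite /W /klc /=; congr (_ * _ * _).
- by rewrite -(kl_self u.1.1) Pi_pow_kl.
- by rewrite -(kl_self u.1.2) Pi_pow_kl.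
- by rewrite -(kl_self u.2) Pi_pow_kl.
Qed.

Definition gl {R : realType} (x : R) : R := if x == 0 then 0 else x * log2 x.

Lemma ln2_gt0 (R : realType) : 0 < ln (2 : R).
Proof. by apply: ln_gt0; rewrite ltr1n. Qed.

Lemma log2M (R : realType) (a b : R) : 0 < a -> 0 < b -> log2 (a * b) = log2 a + log2 b.
Proof. by move=> a0 b0; rewrite /log2 lnM ?posrE // mulrDl. Qed.

Lemma log2_div (R : realType) (a b : R) : 0 < a -> 0 < b -> log2 (a / b) = log2 a - log2 b.
Proof. by move=> a0 b0; rewrite /log2 ln_div ?posrE // mulrBl. Qed.

Lemma ler_log2 (R : realType) (a b : R) : 0 < a -> a <= b -> log2 a <= log2 b.
Proof.
move=> a0 ab; rewrite /log2 ler_pM2r ?invr_gt0 ?ln2_gt0 // ler_ln ?posrE //.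
exact: lt_le_trans ab.
Qed.

Lemma log2_1 (R : realType) : log2 (1 : R) = 0.
Proof. by rewrite /log2 ln1 mul0r. Qed.

Lemma glM (R : realType) (a b : R) : 0 <= a -> 0 <= b -> gl (a * b) = gl a * b + a * gl b.
Proof.
rewrite /gl; move=> a0 b0.
have [->|an0] := eqVneq a 0; first by rewrite !(mul0r, eqxx, add0r).
have [->|bn0] := eqVneq b 0; first by rewrite !(mulr0, eqxx, addr0, mul0r).
rewrite mulf_eq0 (negbTE an0) (negbTE bn0) /=.
have ap : 0 < a by rewrite lt_def an0.
have bp : 0 < b by rewrite lt_def bn0.
rewrite log2M //; ring.
Qed.

Lemma gl_le (R : realType) (a M : R) : 0 <= a -> a <= M -> 0 < M -> gl a <= a * log2 M.
Proof.
move=> a0 aM M0; rewrite /gl; have [->|an0] := eqVneq a 0; first by rewrite mul0r.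
have ap : 0 < a by rewrite lt_def an0.
by rewrite ler_pM2l // ler_log2.
Qed.

Lemma gl_ge (R : realType) (x : R) : 0 <= x -> - gl x <= (ln 2)^-1.
Proof.
move=> x0; rewrite /gl; have [_|xn0] := eqVneq x 0.
  by rewrite oppr0 invr_ge0 ltW // ln2_gt0.
have xp : 0 < x by rewrite lt_def xn0.
have H : ln (x^-1) <= x^-1 - 1.
  have h1 : -1 < x^-1 - 1.
    have : 0 < x^-1 by rewrite invr_gt0.
    lra.
  by have := le_ln1Dx h1; rewrite addrC subrK.
have H2 : - (x * ln x) <= 1 - x.
  rewrite -mulrN -lnV ?posrE //.
  have := ler_wpM2l (ltW xp) H; rewrite mulrBr mulfV ?mulr1 //.
rewrite /log2 mulrA -mulNr ler_pdivrMr ?ln2_gt0 // mulrC mulVf ?gt_eqF ?ln2_gt0 //.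
rewrite mulrC; lra.
Qed.

Lemma entropy_ub (R : realType) (X : finType) (p : X -> R) :
  (forall x, 0 <= p x) -> entropy p <= \sum_(x : X) (ln (2 : R))^-1.
Proof.
move=> p0; rewrite /entropy -sumrN; apply: ler_sum => x _.
exact: (@gl_ge R (p x) (p0 x)).
Qed.

Lemma sum_delta (R : realType) (xi : aa) (f : aa -> R) : \sum_y delta R xi y * f y = f xi.
Proof.
rewrite (bigD1 xi) //= /delta eqxx mul1r big1 ?addr0 // => y /negbTE ->.
by rewrite mul0r.
Qed.

Lemma sum_indic (R : realType) (X : finType) (a : X) : \sum_(y : X) ((y == a)%:R : R) = 1.
Proof.
by rewrite (bigD1 a) //= eqxx big1 ?addr0 // => y /negbTE ->.
Qed.

Lemma delta_dist (R : realType) xi : is_dist (delta R xi).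
Proof. split; [by move=> x; rewrite /delta ler0n | exact: sum_indic]. Qed.

Lemma entropy_delta (R : realType) xi : entropy (delta R xi) = 0.
Proof.
rewrite /entropy big1 ?oppr0 // => x _; rewrite /delta.
by case: (x == xi) => /=; rewrite ?eqxx // oner_eq0 mul1r log2_1.
Qed.

Lemma pU_sum (R : realType) (p : aa -> R) c u : is_cond c -> pU p c u = \sum_x p x * c x u.
Proof.
move=> hc; rewrite /pU (bigD1 (alpha u)) //= big1 ?addr0 // => x hx.
by rewrite (proj2 (hc x)) ?mulr0 // eq_sym.
Qed.

Lemma pU_delta (R : realType) xi c u : is_cond c -> pU (delta R xi) c u = c xi u.
Proof. by move=> hc; rewrite pU_sum // sum_delta. Qed.

Lemma pZ_delta (R : realType) (q gam : R) m xi c z : is_cond c ->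
  pZ q gam m (delta R xi) c z = \sum_u c xi u * W q gam m u z.
Proof. by move=> hc; rewrite /pZ; apply: eq_bigr => u _; rewrite pU_delta. Qed.

Lemma pZ_mix (R : realType) (q gam : R) m p c z : is_cond c ->
  pZ q gam m p c z = \sum_x p x * pZ q gam m (delta R x) c z.
Proof.
move=> hc; rewrite /pZ.
under eq_bigr => u _ do rewrite pU_sum // mulr_suml.
rewrite exchange_big /=; apply: eq_bigr => x _.
rewrite mulr_sumr; apply: eq_bigr => u _; rewrite pU_delta // mulrA //.
Qed.

Lemma pU_ge0 (R : realType) (p : aa -> R) c u : is_dist p -> is_cond c -> 0 <= pU p c u.
Proof.
by move=> [p0 _] hc; rewrite /pU mulr_ge0 // (proj1 (proj1 (hc _))).
Qed.

Lemma pU_sum1 (R : realType) (p : aa -> R) c : is_dist p -> is_cond c -> \sum_u pU p c u = 1.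
Proof.
move=> [p0 p1] hc; under eq_bigr => u _ do rewrite pU_sum //.
rewrite exchange_big /= -[RHS]p1; apply: eq_bigr => x _.
by rewrite -mulr_sumr (proj2 (proj1 (hc x))) mulr1.
Qed.

Lemma pZ_ge0 (R : realType) (q gam : R) m p c z : 0 <= q <= 1 -> 0 <= gam <= 3/2 ->
  is_dist p -> is_cond c -> 0 <= pZ q gam m p c z.
Proof.
by move=> hq hg hp hc; apply: sumr_ge0 => u _; rewrite mulr_ge0 ?pU_ge0 ?W_ge0.
Qed.

Lemma pZ_sum1 (R : realType) (q gam : R) m p c : is_dist p -> is_cond c ->
  \sum_z pZ q gam m p c z = 1.
Proof.
move=> hp hc; rewrite /pZ exchange_big /= -[RHS](pU_sum1 _ _ _ hp hc).
by apply: eq_bigr => u _; rewrite -mulr_sumr W_rowsum mulr1.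
Qed.

Lemma mix_ineq (R : realType) (I Z : finType) (p : I -> R) (Q : I -> Z -> R) :
  (forall x, 0 <= p x) -> (forall x z, 0 <= Q x z) -> (forall x, \sum_z Q x z = 1) ->
  entropy (fun z => \sum_x p x * Q x z) - entropy p <= \sum_x p x * entropy (Q x).
Proof.
move=> p0 Q0 Q1; rewrite /entropy opprK.
set M := fun z => \sum_x p x * Q x z.
have step1 : \sum_x gl (p x) + \sum_x p x * (\sum_z gl (Q x z))
    = \sum_z \sum_x gl (p x * Q x z).
  rewrite [\sum_z _]exchange_big /= -big_split /=; apply: eq_bigr => x _.
  rewrite -{1}[gl (p x)]mulr1 -(Q1 x) mulr_sumr mulr_sumr -big_split /=.
  by apply: eq_bigr => z _; rewrite glM.
have step2 : \sum_z \sum_x gl (p x * Q x z) <= \sum_z gl (M z).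
  apply: ler_sum => z _.
  have a0 : forall x, 0 <= p x * Q x z by move=> x; rewrite mulr_ge0.
  have aM : forall x, p x * Q x z <= M z.
    move=> x; rewrite /M (bigD1 x) //= lerDl sumr_ge0 //.
  have [M0|Mn0] := eqVneq (M z) 0.
    rewrite M0 big1 /gl ?eqxx // => x _.
    have -> : p x * Q x z = 0 by apply/le_anti; rewrite a0 -M0 aM.
    by rewrite eqxx.
  have Mp : 0 < M z by rewrite lt_def Mn0 sumr_ge0.
  apply: (@le_trans _ _ (\sum_x p x * Q x z * log2 (M z))).
    by apply: ler_sum => x _; apply: gl_le.
  by rewrite -mulr_suml /gl (negbTE Mn0).
have H : \sum_x gl (p x) + \sum_x p x * (\sum_z gl (Q x z)) <= \sum_z gl (M z).
  by rewrite step1.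
change (- \sum_z gl (M z) + \sum_x gl (p x) <= \sum_x p x * - \sum_z gl (Q x z)).
rewrite [X in _ <= X](eq_bigr (fun x => - (p x * \sum_z gl (Q x z)))); last by move=> x _; rewrite mulrN.
rewrite sumrN.
have E : forall a b c : R, a + b <= c -> - c + a <= - b by move=> a b c; lra.
exact: E H.
Qed.

Lemma rowent (R : realType) (q gam : R) m u :
  \sum_z gl (W q gam m u z) = \sum_z gl (W q gam m (A, A, A) z).
Proof.
rewrite [RHS](reindex_inj (klc_inj u)); apply: eq_bigr => z _; by rewrite W_kl.
Qed.

Lemma pZ_ge_term (R : realType) (q gam : R) m p c u z : 0 <= q <= 1 -> 0 <= gam <= 3/2 ->
  is_dist p -> is_cond c -> pU p c u * W q gam m u z <= pZ q gam m p c z.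
Proof.
move=> hq hg hp hc; rewrite /pZ (bigD1 u) //= lerDl sumr_ge0 // => v _.
by rewrite mulr_ge0 ?pU_ge0 ?W_ge0.
Qed.

Lemma mutinf_eq (R : realType) (q gam : R) m p c : 0 <= q <= 1 -> 0 <= gam <= 3/2 ->
  is_dist p -> is_cond c ->
  mutinf q gam m p c = entropy (pZ q gam m p c) - entropy (W q gam m (A, A, A)).
Proof.
move=> hq hg hp hc; rewrite /mutinf.
transitivity (\sum_u \sum_z (pU p c u * gl (W q gam m u z)
      - pU p c u * W q gam m u z * log2 (pZ q gam m p c z))).
  apply: eq_bigr => u _; apply: eq_bigr => z _.
  have [a0|an0] := eqVneq (pU p c u * W q gam m u z) 0.
    move/eqP: (a0); rewrite mulf_eq0 => /orP[/eqP->|/eqP Wz].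
      by rewrite !mul0r subrr.
    by rewrite a0 mul0r subr0 Wz /gl eqxx mulr0.
  move: (an0); rewrite mulf_eq0 negb_or => /andP[pn0 Wn0].
  have ap : 0 < pU p c u * W q gam m u z by rewrite lt_def an0 mulr_ge0 ?pU_ge0 ?W_ge0.
  have Zp : 0 < pZ q gam m p c z by apply: (lt_le_trans ap); exact: pZ_ge_term.
  have Wp : 0 < W q gam m u z by rewrite lt_def Wn0 W_ge0.
  rewrite log2_div // /gl (negbTE Wn0); ring.
rewrite (eq_bigr (fun u => pU p c u * \sum_z gl (W q gam m u z)
      - \sum_z pU p c u * W q gam m u z * log2 (pZ q gam m p c z))); last first.
  by move=> u _; rewrite sumrB mulr_sumr.
rewrite sumrB.
rewrite [X in X - _](_ : _ = - entropy (W q gam m (A, A, A))); last first.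
  under eq_bigr => u _ do rewrite rowent.
  by rewrite -mulr_suml pU_sum1 // mul1r /entropy opprK.
rewrite [X in _ - X](_ : _ = - entropy (pZ q gam m p c)); last first.
  rewrite exchange_big /entropy opprK /=; apply: eq_bigr => z _.
  rewrite -mulr_suml.
  have [Z0|//] := eqVneq (pZ q gam m p c z) 0.
  by rewrite -[X in X * _]/(pZ q gam m p c z) Z0 mul0r.
ring.
Qed.

Definition rep (x : aa) : codon :=
  match x with
  | Ala => (G, C, A) | Arg => (C, G, A) | Asn => (A, A, C) | Asp => (G, A, C)
  | Cys => (T, G, C) | Gln => (C, A, A) | Glu => (G, A, A) | Gly => (G, G, A)
  | His => (C, A, C) | Ile => (A, T, A) | Leu => (C, T, A) | Lys => (A, A, A)
  | Met => (A, T, G) | Phe => (T, T, C) | Pro => (C, C, A) | Ser => (T, C, A)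
  | Thr => (A, C, A) | Trp => (T, G, G) | Tyr => (T, A, C) | Val => (G, T, A)
  | Stp => (T, A, A) end.

Lemma alpha_rep x : alpha (rep x) = x. Proof. by case: x. Qed.

Lemma cond_ex (R : realType) : exists c : aa -> codon -> R, is_cond c.
Proof.
exists (fun x u => (u == rep x)%:R) => x; split.
  by split; [move=> u; rewrite ler0n | exact: sum_indic].
move=> u hu; case: eqP => // eu; move: hu; by rewrite eu alpha_rep eqxx.
Qed.

Lemma HZ_has_sup (R : realType) (q gam : R) m x : 0 <= q <= 1 -> 0 <= gam <= 3/2 ->
  has_sup [set entropy (pZ q gam m (delta R x) c) | c in @is_cond R].
Proof.
move=> hq hg; split.
  by have [c hc] := cond_ex R; exists (entropy (pZ q gam m (delta R x) c)); exists c.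
exists (\sum_(z : codon) (ln (2 : R))^-1) => _ [c hc <-].
by apply: entropy_ub => z; apply: pZ_ge0 => //; exact: delta_dist.
Qed.

Lemma key (R : realType) (q gam : R) m xi p c : 0 <= q <= 1 -> 0 <= gam <= 3/2 ->
  (forall eta : aa, HZmax q gam m eta <= HZmax q gam m xi) ->
  is_dist p -> is_cond c ->
  mutinf q gam m p c - entropy p <= HZmax q gam m xi - entropy (W q gam m (A, A, A)).
Proof.
move=> hq hg hxi hp hc; rewrite mutinf_eq //.
have -> : pZ q gam m p c = (fun z => \sum_x p x * pZ q gam m (delta R x) c z).
  by apply: funext => z; exact: pZ_mix.
suff : entropy (fun z => \sum_x p x * pZ q gam m (delta R x) c z) - entropy p
   <= HZmax q gam m xi by move=> H; lra.
apply: le_trans (@mix_ineq R aa codon p (fun x z => pZ q gam m (delta R x) c z) _ _ _) _.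
- by case: hp.
- by move=> x z; apply: pZ_ge0 => //; exact: delta_dist.
- by move=> x; apply: pZ_sum1 => //; exact: delta_dist.
have [p0 p1] := hp.
rewrite -[X in _ <= X]mul1r -p1 mulr_suml; apply: ler_sum => x _.
apply: ler_wpM2l => //; apply: le_trans (hxi x).
rewrite /HZmax; by apply: (sup_upper_bound (HZ_has_sup R q gam m x hq hg)); exists c.
Qed.

Theorem theorem1 (R : realType) (q gam : R) (m : nat) :
  0 <= q <= 1 -> 0 <= gam <= 3 / 2 -> (1 <= m)%N ->
  forall xi : aa,
    (forall eta : aa, HZmax q gam m eta <= HZmax q gam m xi) ->
    Cc q gam m = Rc q gam m (delta R xi).
Proof.
move=> hq hg _ xi hxi.
set h := entropy (W q gam m (A, A, A)).
have [c0 hc0] := cond_ex R.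
have Rc_le : forall p, is_dist p -> Rc q gam m p <= HZmax q gam m xi - h.
  move=> p hp; apply: ge_sup.
    by exists (mutinf q gam m p c0 - entropy p); exists c0.
  by move=> _ [c hc <-]; exact: key.
have hsD : has_sup [set mutinf q gam m (delta R xi) c - entropy (delta R xi) | c in @is_cond R].
  split; first by exists (mutinf q gam m (delta R xi) c0 - entropy (delta R xi)); exists c0.
  exists (HZmax q gam m xi - h) => _ [c hc <-]; apply: key => //; exact: delta_dist.
have RcD : Rc q gam m (delta R xi) = HZmax q gam m xi - h.
  apply/le_anti; rewrite (Rc_le _ (delta_dist R xi)) /=.
  suff : HZmax q gam m xi <= Rc q gam m (delta R xi) + h by move=> H; lra.
  apply: ge_sup.
    by exists (entropy (pZ q gam m (delta R xi) c0)); exists c0.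
  move=> _ [c hc <-].
  have H : mutinf q gam m (delta R xi) c - entropy (delta R xi) <= Rc q gam m (delta R xi)
    := sup_upper_bound hsD (ex_intro2 _ _ c hc erefl).
  rewrite (mutinf_eq _ _ _ _ _ _ hq hg (delta_dist R xi) hc) (entropy_delta R xi) subr0 -/h in H.
  lra.
rewrite /Cc; apply/le_anti/andP; split.
  apply: ge_sup; first by exists (Rc q gam m (delta R xi)); exists (delta R xi) => //; exact: delta_dist.
  by move=> _ [p hp <-]; rewrite RcD; exact: Rc_le.
apply: sup_upper_bound; last by exists (delta R xi) => //; exact: delta_dist.
split; first by exists (Rc q gam m (delta R xi)); exists (delta R xi) => //; exact: delta_dist.
by exists (Rc q gam m (delta R xi)) => _ [p hp <-]; rewrite RcD; exact: Rc_le.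
Qed.
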